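(* In any probabilistic theory that supports universal self-steering, every irreducible finite-dimensional state space in the theory is homogeneous and weakly self-dual.
   Context: An abstract state space (system) is a pair $(A,u_A)$ where $A$ is a finite-dimensional real vector space with a closed, pointed, generating convex cone $A_+$, and $u_A$ is an interior point of the dual cone $A^*_+$; states are elements of $A_+$ with $u_A=1$. For systems $A,B$, $A\otimes_{\max}B$ (resp. $A\otimes_{\min}B$) is the space of bilinear forms on $A^*\times B^*$ ordered by the cone of forms nonnegative on $A^*_+\times B^*_+$ (resp. the cone generated by products $\alpha\otimes\beta$, $\alpha\in A_+,\beta\in B_+$), with order unit $u_A\otimes u_B$; a composite $AB$ is this vector space with any cone between these two. A probabilistic theory is a class of finite-dimensional abstract state spaces closed under formation of such composites. For a bipartite state $\omega$ on $AB$, $\hat\omega:A^*\to B$ is $\hat\omega(a)(b)=\omega(a,b)$ and $\omega^B=\hat\omega(u_A)$. An observable on $A$ is a finite family $a_i\in A^*_+$ with $\sum_ia_i=u_A$; an ensemble for $\beta\in B_+$ is a finite family $\beta_i\in B_+$ with $\sum_i\beta_i=\beta$; $\omega$ steers its $B$-marginal if every ensemble for $\omega^B$ equals $\{\hat\omega(x_i)\}$ for some observable $\{x_i\}$ on $A$. The theory supports universal self-steering if for every system $A$ in the theory and every state $\alpha$ of $A$ there is a state $\omega$ on a composite $AA$ of two copies of $A$ whose (second) marginal is $\alpha$ and which steers that marginal. A state space is irreducible if it is not an ordered direct sum of two nonzero ordered subspaces; homogeneous if its order-automorphism group acts transitively on the interior of its positive cone; weakly self-dual if there is an order-isomorphism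 (linear bijection preserving positivity in both directions) $A^*\to A$. *)

(* Defs.v *)
From HB Require Import structures.
From mathcomp Require Import all_boot all_order all_algebra.
From mathcomp Require Import reals.
Set Implicit Arguments. Unset Strict Implicit. Unset Printing Implicit Defensive.
Import Order.TTheory GRing.Theory Num.Theory.
Local Open Scope ring_scope.

(* Conventions: an n-dimensional real vector space A is represented by
   'rV[R]_n; its dual A^* is also represented by 'rV[R]_n via the standard
   pairing <f, x> = \sum_i f_i x_i.  Linear maps are matrices acting on the
   right (x |-> x *m M). *)

Section StateSpaces.
Variable R : realType.

Definition pairing n (f x : 'rV[R]_n) : R := \sum_(i < n) f 0 i * x 0 i.

Definition supdist n (x y : 'rV[R]_n) : R :=
  \big[Num.max/0]_(i < n) `|x 0 i - y 0 i|.

Definition is_closed n (K : 'rV[R]_n -> Prop) : Prop :=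
  forall x, ~ K x -> exists2 e : R, 0 < e & forall y, supdist x y < e -> ~ K y.

Definition interior n (K : 'rV[R]_n -> Prop) (x : 'rV[R]_n) : Prop :=
  exists2 e : R, 0 < e & forall y, supdist x y < e -> K y.

Definition convex_cone n (K : 'rV[R]_n -> Prop) : Prop :=
  [/\ K 0, (forall x y, K x -> K y -> K (x + y))
    & (forall (t : R) x, 0 <= t -> K x -> K (t *: x))].

Definition pointed n (K : 'rV[R]_n -> Prop) : Prop :=
  forall x, K x -> K (- x) -> x = 0.

Definition generating n (K : 'rV[R]_n -> Prop) : Prop :=
  forall x, exists a b, [/\ K a, K b & x = a - b].

Definition dual_cone n (K : 'rV[R]_n -> Prop) : 'rV[R]_n -> Prop :=
  fun f => forall x, K x -> 0 <= pairing f x.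

Definition is_sys n (K : 'rV[R]_n -> Prop) (u : 'rV[R]_n) : Prop :=
  [/\ is_closed K, convex_cone K, pointed K, generating K
    & interior (dual_cone K) u].

Definition is_state n (K : 'rV[R]_n -> Prop) (u x : 'rV[R]_n) : Prop :=
  K x /\ pairing u x = 1.

(* Bilinear forms on A^* x B^* are n x m matrices, stored vectorized
   (mxvec) in 'rV_(n*m); w(f,g) = f *m (vec_mx w) *m g^T.
   The elementary tensor a (x) b is the form (f,g) |-> <f,a><g,b>. *)
Definition tens n m (a : 'rV[R]_n) (b : 'rV[R]_m) : 'rV[R]_(n * m) :=
  mxvec (a^T *m b).

Definition bil n m (w : 'rV[R]_(n * m)) (f : 'rV[R]_n) (g : 'rV[R]_m) : R :=
  (f *m vec_mx w *m g^T) 0 0.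

Definition min_tensor n m (KA : 'rV[R]_n -> Prop) (KB : 'rV[R]_m -> Prop)
  : 'rV[R]_(n * m) -> Prop :=
  fun w => exists k (a : 'I_k -> 'rV[R]_n) (b : 'I_k -> 'rV[R]_m),
    [/\ forall i, KA (a i), forall i, KB (b i)
      & w = \sum_(i < k) tens (a i) (b i)].

Definition max_tensor n m (KA : 'rV[R]_n -> Prop) (KB : 'rV[R]_m -> Prop)
  : 'rV[R]_(n * m) -> Prop :=
  fun w => forall f g, dual_cone KA f -> dual_cone KB g -> 0 <= bil w f g.

Definition is_composite n m (KA : 'rV[R]_n -> Prop) (uA : 'rV[R]_n)
  (KB : 'rV[R]_m -> Prop) (uB : 'rV[R]_m) (KC : 'rV[R]_(n * m) -> Prop) : Prop :=
  [/\ is_sys KC (tens uA uB),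
      (forall w, min_tensor KA KB w -> KC w)
    & (forall w, KC w -> max_tensor KA KB w)].

Definition hat n m (w : 'rV[R]_(n * m)) (a : 'rV[R]_n) : 'rV[R]_m :=
  a *m vec_mx w.

Definition marginalB n m (uA : 'rV[R]_n) (w : 'rV[R]_(n * m)) : 'rV[R]_m :=
  hat w uA.

Definition observable n (KA : 'rV[R]_n -> Prop) (uA : 'rV[R]_n) k
  (x : 'I_k -> 'rV[R]_n) : Prop :=
  (forall i, dual_cone KA (x i)) /\ \sum_(i < k) x i = uA.

Definition ensemble m (KB : 'rV[R]_m -> Prop) (beta : 'rV[R]_m) k
  (b : 'I_k -> 'rV[R]_m) : Prop :=
  (forall i, KB (b i)) /\ \sum_(i < k) b i = beta.

Definition steers n m (KA : 'rV[R]_n -> Prop) (uA : 'rV[R]_n)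
  (KB : 'rV[R]_m -> Prop) (w : 'rV[R]_(n * m)) : Prop :=
  forall k (b : 'I_k -> 'rV[R]_m), ensemble KB (marginalB uA w) b ->
    exists x : 'I_k -> 'rV[R]_n, observable KA uA x /\ forall i, hat w (x i) = b i.

Definition theory := forall n : nat, ('rV[R]_n -> Prop) -> 'rV[R]_n -> Prop.

Definition prob_theory (Th : theory) : Prop :=
  (forall n K u, Th n K u -> is_sys K u) /\
  (forall n K u m L v, Th n K u -> Th m L v ->
     exists C, is_composite K u L v C /\ Th (n * m)%N C (tens u v)).

Definition universal_self_steering (Th : theory) : Prop :=
  forall n K u, Th n K u -> forall alpha, is_state K u alpha ->
    exists C w, [/\ is_composite K u K u C, Th (n * n)%N C (tens u u),
                    is_state C (tens u u) w, marginalB u w = alpha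
                  & steers K u K w].

Definition subspace n (S : 'rV[R]_n -> Prop) : Prop :=
  [/\ S 0, (forall x y, S x -> S y -> S (x + y))
    & (forall (t : R) x, S x -> S (t *: x))].

Definition ordered_direct_sum n (K S1 S2 : 'rV[R]_n -> Prop) : Prop :=
  [/\ subspace S1, subspace S2,
      (forall x, S1 x -> S2 x -> x = 0),
      (forall x, exists x1 x2, [/\ S1 x1, S2 x2 & x = x1 + x2])
    & (forall x, K x <-> exists x1 x2,
          [/\ S1 x1, K x1, S2 x2, K x2 & x = x1 + x2])].

Definition irreducible n (K : 'rV[R]_n -> Prop) : Prop :=
  ~ exists S1 S2, [/\ ordered_direct_sum K S1 S2,
                      (exists x, S1 x /\ x <> 0) & (exists x, S2 x /\ x <> 0)].

Definition order_automorphism n (K : 'rV[R]_n -> Prop) (M : 'M[R]_n) : Prop :=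
  M \in unitmx /\ forall x, K x <-> K (x *m M).

Definition homogeneous n (K : 'rV[R]_n -> Prop) : Prop :=
  forall x y, interior K x -> interior K y ->
    exists M, order_automorphism K M /\ x *m M = y.

Definition weakly_self_dual n (K : 'rV[R]_n -> Prop) : Prop :=
  exists M : 'M[R]_n, M \in unitmx /\ forall f, dual_cone K f <-> K (f *m M).

End StateSpaces.

(* Main.v *)
Require Import Defs.
From mathcomp Require Import all_boot all_order all_algebra reals.
From mathcomp Require Import all_classical all_analysis.
From mathcomp Require Import ring lra.
Import Defs.
Set Implicit Arguments. Unset Strict Implicit. Unset Printing Implicit Defensive.
Import Order.TTheory GRing.Theory Num.Theory.
Import numFieldNormedType.Exports.
Local Open Scope ring_scope.
Section S.
Variable R : realType.

Lemma supdist_ltP n (x y : 'rV[R]_n) e : 0 < e ->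
  (supdist x y < e <-> forall i, `|x 0 i - y 0 i| < e).
Proof.
move=> e0; rewrite /supdist; split.
  by move/bigmax_ltP => [_ H] i; exact: H.
by move=> H; apply/bigmax_ltP; split.
Qed.

Lemma supdist_xx n (x : 'rV[R]_n) e : 0 < e -> supdist x x < e.
Proof. by move=> e0; apply/supdist_ltP => // i; rewrite subrr normr0. Qed.

Lemma small_scale n (y : 'rV[R]_n) e : 0 < e ->
  exists2 t, 0 < t & forall x, supdist x (x + t *: y) < e /\ supdist x (x - t *: y) < e.
Proof.
move=> e0.
set S := \sum_(i < n) `|y 0 i|.
have S0 : 0 <= S by apply: sumr_ge0 => i _.
have t0 : 0 < e / (1 + S) by apply: divr_gt0 => //; lra.
have key : forall i, `|e / (1 + S) * y 0 i| < e.
  move=> i; have h : `|y 0 i| <= S by rewrite /S (bigD1 i) //= lerDl sumr_ge0.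
  rewrite normrM gtr0_norm // mulrAC ltr_pdivrMr; last lra.
  by rewrite ltr_pM2l //; lra.
exists (e / (1 + S)) => // x; split; apply/supdist_ltP => // i; rewrite !mxE.
- by rewrite opprD addrA subrr add0r normrN.
- by rewrite opprB addrC subrK.
Qed.

End S.
Section P.
Variable R : realType.
Implicit Types (n : nat).

Lemma pairingE n (f x : 'rV[R]_n) : pairing f x = (f *m x^T) 0 0.
Proof. by rewrite /pairing mxE; apply: eq_bigr => i _; rewrite mxE. Qed.

Lemma pairingC n (f x : 'rV[R]_n) : pairing f x = pairing x f.
Proof. by rewrite /pairing; apply: eq_bigr => i _; rewrite mulrC. Qed.

Lemma pairingDl n (f g x : 'rV[R]_n) : pairing (f + g) x = pairing f x + pairing g x.
Proof. by rewrite !pairingE mulmxDl mxE. Qed.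

Lemma pairingZl n (t : R) (f x : 'rV[R]_n) : pairing (t *: f) x = t * pairing f x.
Proof. by rewrite !pairingE -scalemxAl mxE. Qed.

Lemma pairingNl n (f x : 'rV[R]_n) : pairing (- f) x = - pairing f x.
Proof. by rewrite -scaleN1r pairingZl mulN1r. Qed.

Lemma pairingBl n (f g x : 'rV[R]_n) : pairing (f - g) x = pairing f x - pairing g x.
Proof. by rewrite pairingDl pairingNl. Qed.

Lemma pairingDr n (f g x : 'rV[R]_n) : pairing x (f + g) = pairing x f + pairing x g.
Proof. by rewrite pairingC pairingDl !(pairingC x). Qed.

Lemma pairingZr n (t : R) (f x : 'rV[R]_n) : pairing x (t *: f) = t * pairing x f.
Proof. by rewrite pairingC pairingZl !(pairingC x). Qed.

Lemma pairingNr n (f x : 'rV[R]_n) : pairing x (- f) = - pairing x f.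
Proof. by rewrite pairingC pairingNl !(pairingC x). Qed.

Lemma pairingBr n (f g x : 'rV[R]_n) : pairing x (f - g) = pairing x f - pairing x g.
Proof. by rewrite pairingDr pairingNr. Qed.

Lemma pairing0l n (x : 'rV[R]_n) : pairing 0 x = 0.
Proof. by rewrite pairingE mul0mx mxE. Qed.

Lemma pairing_ge0 n (x : 'rV[R]_n) : 0 <= pairing x x.
Proof. by apply: sumr_ge0 => i _; rewrite -expr2 sqr_ge0. Qed.

Lemma pairing_gt0 n (x : 'rV[R]_n) : x != 0 -> 0 < pairing x x.
Proof.
move=> x0; rewrite lt_neqAle pairing_ge0 andbT eq_sym.
apply: contra x0 => /eqP h; apply/eqP/rowP => i; rewrite mxE.
have : x 0 i * x 0 i <= pairing x x.
  rewrite /pairing (bigD1 i) //= lerDl; apply: sumr_ge0 => j _.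
  by rewrite -expr2 sqr_ge0.
rewrite h -expr2 => hi; apply/eqP; by rewrite -sqrf_eq0 eq_le hi sqr_ge0.
Qed.

Lemma bilE n m (w : 'rV[R]_(n * m)) f g : bil w f g = pairing g (hat w f).
Proof. by rewrite /bil /hat pairingC pairingE. Qed.

Lemma cone_sum n (K : 'rV[R]_n -> Prop) k (F : 'I_k -> 'rV[R]_n) :
  convex_cone K -> (forall i, K (F i)) -> K (\sum_(i < k) F i).
Proof. by case=> K0 KD _ KF; elim/big_ind: _ => //. Qed.

Lemma quad_neg (a b : R) : 0 < a -> 0 <= b ->
  exists t, [/\ 0 < t, t <= 1 & t * t * b - 2 * t * a < 0].
Proof.
move=> a0 b0; set d := a + b + 1.
have d0 : 0 < d by rewrite /d; lra.
exists (a / d); split.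
- exact: divr_gt0.
- by rewrite ler_pdivrMr // mul1r /d; lra.
- have ht : a / d * d = a by rewrite divfK // gt_eqF.
  have t0 : 0 < a / d by exact: divr_gt0.
  move: ht t0; rewrite /d; set t := a / _ => ht t0.
  nra.
Qed.

End P.
Section T.
Variable R : realType.
Local Open Scope classical_set_scope.

Lemma supdist_norm n (x y : 'rV[R]_n) e : 0 < e -> `|x - y| < e -> supdist x y < e.
Proof.
move=> e0 h; apply/supdist_ltP => // i.
move: h; rewrite [X in X < _]/Num.Def.normr /= mx_normrE => /bigmax_ltP [_ H].
have hh := H (ord0, i) isT. simpl in hh. rewrite !mxE in hh. by have -> : (0 : 'I_1) = ord0 by apply/val_inj.
Qed.

Lemma closed_of n (K : 'rV[R]_n -> Prop) : is_closed K -> closed K.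
Proof.
move=> Kc; rewrite -[K]setCK; apply: open_closedC.
rewrite openE => x nKx.
have [e e0 He] := Kc x nKx.
rewrite /topology_structure.interior; apply/nbhs_ballP; exists e => // y.
rewrite -ball_normE /ball_ /= => hxy; apply: He.
exact: supdist_norm.
Qed.

Lemma box_compact n (z : 'rV[R]_n) r :
  compact [set v : 'rV[R]_n | forall i, `[z ord0 i - r, z ord0 i + r]%classic (v ord0 i)].
Proof.
apply: (@rV_compact _ _ (fun i => `[z ord0 i - r, z ord0 i + r]%classic)) => i.
exact: segment_compact.
Qed.

Lemma sum_continuous n (F : 'I_n -> 'rV[R]_n -> R) :
  (forall i, continuous (F i)) -> continuous (fun y => \sum_(i < n) F i y).
Proof.
move=> Fc.
suff H : forall s : seq 'I_n, continuous (fun y => \sum_(i <- s) F i y).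
  by apply: H.
elim=> [|a s IH].
  have -> : (fun y => \sum_(i <- [::]) F i y) = (fun=> 0) by apply: funext => y; rewrite big_nil.
  exact: cst_continuous.
have -> : (fun y => \sum_(i <- a :: s) F i y) = (F a + (fun y => \sum_(i <- s) F i y))%R.
  by apply: funext => y; rewrite big_cons.
by move=> y; apply: continuousD; [exact: Fc | exact: IH].
Qed.

Lemma phi_continuous n (z : 'rV[R]_n) :
  continuous (fun y : 'rV[R]_n => pairing (z - y) (z - y)).
Proof.
rewrite /pairing; apply: sum_continuous => i.
have hc : continuous (fun y : 'rV[R]_n => (z - y) 0 i).
  have -> : (fun y : 'rV[R]_n => (z - y) 0 i) = (fun y => z 0 i - y 0 i).
    by apply: funext => y; rewrite !mxE.
  move=> y; apply: continuousB; first exact: cst_continuous.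
  exact: coord_continuous.
by move=> y; apply: continuousM; exact: hc.
Qed.

End T.
Section Sep.
Variable R : realType.
Local Open Scope classical_set_scope.

Lemma coord_sq n (x : 'rV[R]_n) i : x 0 i * x 0 i <= pairing x x.
Proof.
rewrite /pairing (bigD1 i) //= lerDl; apply: sumr_ge0 => j _.
by rewrite -expr2 sqr_ge0.
Qed.

Lemma pairing_expand n (v d : 'rV[R]_n) t :
  pairing (v - t *: d) (v - t *: d) =
  pairing v v - 2 * t * pairing v d + t * t * pairing d d.
Proof.
rewrite pairingBl !pairingBr !pairingZl !pairingZr (pairingC d v); ring.
Qed.

Lemma separation n (K : 'rV[R]_n -> Prop) (z : 'rV[R]_n) :
  is_closed K -> convex_cone K -> ~ K z ->
  exists g, dual_cone K g /\ pairing g z < 0.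
Proof.
move=> Kcl [K0 KD KZ] nKz.
pose phi := fun y : 'rV[R]_n => pairing (z - y) (z - y).
pose r := 1 + phi 0.
have phi0 : 0 <= phi 0 by exact: pairing_ge0.
pose B := [set v : 'rV[R]_n | forall i, `[z ord0 i - r, z ord0 i + r]%classic (v ord0 i)].
have cA : compact (B `&` K) by apply: compact_closedI; [exact: box_compact | exact: closed_of].
have A0 : (B `&` K) 0.
  split => //= i; rewrite /= in_itv /= mxE.
  have := coord_sq (z - 0) i; rewrite subr0 -/(phi 0) => h.
  have -> : z ord0 i = z 0 i by congr (z _ _); apply/val_inj.
  rewrite /r /phi subr0; apply/andP; split; nra.
have hcont : {within B `&` K, continuous phi}.
  by apply: continuous_subspaceT; exact: phi_continuous.
have [c Ac cmin] := @EVT_min_rV R n phi (B `&` K) (ex_intro _ _ A0) cA hcont.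
move: Ac; rewrite in_setE => -[Bc Kc].
have phic : phi c <= phi 0 by apply: cmin; rewrite in_setE.
have minall : forall w, K w -> phi c <= phi w.
  move=> w Kw; case: (pselect (B w)) => Bw.
    by apply: cmin; rewrite in_setE.
  have [i ni] : exists i, ~ `[z ord0 i - r, z ord0 i + r]%classic (w ord0 i).
    by apply/existsNP.
  move: ni; rewrite /= in_itv /= => /negP; rewrite negb_and -!ltNge => hi.
  have := coord_sq (z - w) i; rewrite -/(phi w) !mxE.
  have -> : (0 : 'I_1) = ord0 by apply/val_inj.
  rewrite /r in hi; case/orP: hi => hi h; nra.
pose v := z - c.
have dir : forall d, (forall t, 0 < t -> t <= 1 -> K (c + t *: d)) -> pairing v d <= 0.
  move=> d Hd; rewrite leNgt; apply/negP => a0.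
  have [t [t0 t1 tq]] := quad_neg a0 (pairing_ge0 d).
  have := minall _ (Hd t t0 t1).
  rewrite /phi opprD addrA -/v pairing_expand -/(phi c) /v.
  lra.
have v0 : v != 0.
  apply/negP => /eqP hv; apply: nKz.
  by have -> : z = c by apply/eqP; rewrite -subr_eq0 -/v hv.
exists (c - z); split.
  move=> k Kk; rewrite -opprB pairingNl oppr_ge0 -/v; apply: dir => t t0 t1.
  by apply: KD => //; apply: KZ => //; exact: ltW.
have hc : pairing v (- c) <= 0.
  apply: dir => t t0 t1.
  have -> : c + t *: - c = (1 - t) *: c by rewrite scalerBl scale1r scalerN.
  by apply: KZ => //; lra.
have zv : z = v + c by rewrite /v subrK.
rewrite -opprB pairingNl -/v zv pairingDr.
move: hc; rewrite pairingNr.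
have := pairing_gt0 v0; lra.
Qed.

End Sep.
Section Sys.
Variable R : realType.

Lemma sys_u_dual n (K : 'rV[R]_n -> Prop) u : is_sys K u -> dual_cone K u.
Proof. by case=> _ _ _ _ [e e0 He]; apply: He; exact: supdist_xx. Qed.

Lemma sys_u_pos n (K : 'rV[R]_n -> Prop) u x : is_sys K u -> K x -> x != 0 ->
  0 < pairing u x.
Proof.
move=> Hs Kx x0; have [_ _ _ _ [e e0 He]] := Hs.
have [t t0 Ht] := small_scale x e0.
have := He _ (Ht u).2 x Kx; rewrite pairingBl pairingZl.
have := pairing_gt0 x0; nra.
Qed.

Lemma interior_scale n (K : 'rV[R]_n -> Prop) c s : convex_cone K ->
  Defs.interior K c -> 0 < s -> Defs.interior K (s *: c).
Proof.
move=> [_ _ KZ] [e e0 He] s0; exists (s * e); first exact: mulr_gt0.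
move=> y hy.
have -> : y = s *: (s^-1 *: y) by rewrite scalerA divff ?gt_eqF // scale1r.
apply: KZ; first exact: ltW.
apply: He; apply/supdist_ltP => // i.
move/supdist_ltP: hy => /(_ (mulr_gt0 s0 e0)) /(_ i); rewrite !mxE => h.
have -> : c 0 i - s^-1 * y 0 i = s^-1 * (s * c 0 i - y 0 i).
  by rewrite mulrBr mulrA mulVf ?gt_eqF // mul1r.
rewrite normrM gtr0_norm ?invr_gt0 // ltr_pdivrMl //.
Qed.

Lemma interior_in n (K : 'rV[R]_n -> Prop) c : Defs.interior K c -> K c.
Proof. by case=> e e0 He; apply: He; exact: supdist_xx. Qed.

Lemma interior_exists n (K : 'rV[R]_n -> Prop) u : is_sys K u ->
  exists c, Defs.interior K c.
Proof.
case=> _ Kc _ Kg _.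
have hc := Kc; case: hc => K0 KD KZ.
have ab : forall i : 'I_n, exists ab : 'rV[R]_n * 'rV[R]_n,
    [/\ K ab.1, K ab.2 & 'e_i = ab.1 - ab.2].
  by move=> i; have [a [b [Ka Kb E]]] := Kg 'e_i; exists (a, b).
have [F HF] := choice ab.
exists (\sum_(i < n) ((F i).1 + (F i).2)).
exists 1 => // y hy.
pose d := fun i => (y - \sum_(i < n) ((F i).1 + (F i).2)) 0 i.
have hd : forall i, `|d i| < 1.
  move=> i; move/supdist_ltP: hy => /(_ ltr01) /(_ i).
  by rewrite /d !mxE distrC.
have -> : y = \sum_(i < n) ((1 + d i) *: (F i).1 + (1 - d i) *: (F i).2).
  have e1 := row_sum_delta (y - \sum_(i < n) ((F i).1 + (F i).2)).
  rewrite -/d in e1.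
  have : \sum_(j < n) d j *: 'e_j = \sum_(i < n) (d i *: (F i).1 - d i *: (F i).2).
    by apply: eq_bigr => i _; have [_ _ ->] := HF i; rewrite scalerBr.
  move=> e2; rewrite e2 in e1.
  apply/eqP; rewrite -subr_eq0; apply/eqP.
  move/eqP: e1; rewrite subr_eq => /eqP ->.
  rewrite -big_split /= -sumrB; apply: big1 => i _.
  by apply/rowP => j; rewrite !mxE; ring.
apply: cone_sum => // i; have [Ka Kb _] := HF i.
by apply: KD; apply: KZ => //; have := hd i; rewrite ltr_norml => /andP[]; lra.
Qed.

End Sys.
Section Core.
Variable R : realType.

Lemma zero_not_interior n (K : 'rV[R]_n.+1 -> Prop) : pointed K ->
  ~ Defs.interior K 0.
Proof.
move=> Kp [e e0 He].
have [t t0 Ht] := small_scale ('e_ord0 : 'rV[R]_n.+1) e0.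
have [h1 h2] := Ht 0.
have K1 := He _ h1; have K2 := He _ h2.
rewrite add0r in K1; rewrite sub0r in K2.
have := Kp _ K1 K2 => /rowP /(_ ord0); rewrite !mxE eqxx mulr1.
by move=> ht; move: t0; rewrite ht ltxx.
Qed.

Lemma interior_pos n (K : 'rV[R]_n.+1 -> Prop) u c : is_sys K u ->
  Defs.interior K c -> 0 < pairing u c.
Proof.
move=> Hs Hc; apply: (sys_u_pos Hs (interior_in Hc)).
apply/eqP => c0; rewrite c0 in Hc; have [_ _ Kp _ _] := Hs.
exact: (zero_not_interior Kp Hc).
Qed.

Lemma interior_state n (K : 'rV[R]_n.+1 -> Prop) u : is_sys K u ->
  exists a, Defs.interior K a /\ pairing u a = 1.
Proof.
move=> Hs; have [c Hc] := interior_exists Hs.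
have p0 := interior_pos Hs Hc.
exists ((pairing u c)^-1 *: c); split.
  by apply: interior_scale => //; [case: Hs | rewrite invr_gt0].
by rewrite pairingZr mulVf ?gt_eqF.
Qed.

Lemma dual_scale n (K : 'rV[R]_n -> Prop) s f : 0 <= s -> dual_cone K f ->
  dual_cone K (s *: f).
Proof. by move=> s0 Hf x Kx; rewrite pairingZl mulr_ge0 //; exact: Hf. Qed.

Lemma core (Th : theory R) n (K : 'rV[R]_n -> Prop) u alpha :
  prob_theory Th -> universal_self_steering Th -> Th n K u ->
  Defs.interior K alpha -> pairing u alpha = 1 ->
  exists M : 'M[R]_n, [/\ M \in unitmx, u *m M = alpha &
     forall f, dual_cone K f <-> K (f *m M)].
Proof.
move=> [Hsys _] Huss HT Ha Hu.
have Hs := Hsys _ _ _ HT.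
have [Kcl Kc Kp Kg _] := Hs; have Kc' := Kc; case: Kc' => K0 KD KZ.
have [C [w [Hcomp _ [Cw _] marg steer]]] := Huss _ _ _ HT alpha (conj (interior_in Ha) Hu).
have [_ _ Cmax] := Hcomp.
pose M := vec_mx w.
have E1 : forall f, dual_cone K f -> K (f *m M).
  move=> f Hf; apply: contrapT => nK.
  have [g [Hg Hneg]] := separation Kcl Kc nK.
  have := Cmax _ Cw f g Hf Hg; rewrite bilE /hat -/M.
  by rewrite leNgt Hneg.
have E2 : forall y, K y -> exists2 f, dual_cone K f & f *m M = y.
  move=> y Ky; have [e e0 He] := Ha.
  have [t t0 Ht] := small_scale y e0.
  have Kay := He _ (Ht alpha).2.
  pose b := fun i : 'I_2 => if i == ord0 then t *: y else alpha - t *: y.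
  have Hb : ensemble K (marginalB u w) b.
    split; first by move=> i; rewrite /b; case: ifP => _ //; exact: KZ (ltW t0) Ky.
    by rewrite marg big_ord_recr big_ord1 /b /= addrC subrK.
  have [x [[Hx _] Hxb]] := steer 2 b Hb.
  exists (t^-1 *: x ord0); first by apply: dual_scale => //; rewrite invr_ge0 ltW.
  have := Hxb ord0; rewrite /hat -/M /b eqxx => h.
  by rewrite -scalemxAl h scalerA mulVf ?gt_eqF // scale1r.
have Mu : M \in unitmx.
  rewrite -row_full_unit -sub1mx; apply/row_subP => i.
  have [a [b' [Ka Kb ->]]] := Kg (row i 1%:M).
  have [fa _ <-] := E2 _ Ka; have [fb _ <-] := E2 _ Kb.
  by rewrite -mulmxBl submxMl.
exists M; split => //.
move=> f; split; first exact: E1.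
move=> Kf; have [f' Hf' e] := E2 _ Kf.
by have <- : f' = f by apply: (can_inj (mulmxK Mu)).
Qed.

End Core.
Lemma cone_scale_iff (R : realType) n (K : 'rV[R]_n -> Prop) s x :
  convex_cone K -> 0 < s -> (K (s *: x) <-> K x).
Proof.
move=> [_ _ KZ] s0; split; last by apply: KZ; exact: ltW.
move=> h; have -> : x = s^-1 *: (s *: x) by rewrite scalerA mulVf ?gt_eqF // scale1r.
by apply: KZ => //; rewrite invr_ge0 ltW.
Qed.

Theorem proposition5p8 (R : realType) (Th : theory R) :
  prob_theory Th -> universal_self_steering Th ->
  forall n (K : 'rV[R]_n -> Prop) (u : 'rV[R]_n),
    Th n K u -> irreducible K -> homogeneous K /\ weakly_self_dual K.
Proof.
move=> Hpt Huss n K u HT _.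
have Hs := Hpt.1 _ _ _ HT.
have Kc : convex_cone K by case: Hs.
case: n K u HT Hs Kc => [|n] K u HT Hs Kc.
  split.
    move=> x y _ _; exists 1%:M; split; last by rewrite !thinmx0.
    by split; [exact: unitmx1 | move=> v; rewrite mulmx1].
  exists 1%:M; split; first exact: unitmx1.
  move=> f; rewrite mulmx1 thinmx0; split => _; first by case: Kc.
  by move=> x _; rewrite /pairing big_ord0.
split; last first.
  have [a [Ha Hu]] := interior_state Hs.
  have [M [Mu _ HM]] := core Hpt Huss HT Ha Hu.
  by exists M.
move=> x y Hx Hy.
have px := interior_pos Hs Hx; have py := interior_pos Hs Hy.
set sx := pairing u x in px; set sy := pairing u y in py.
have Hax : Defs.interior K (sx^-1 *: x) by apply: interior_scale; rewrite ?invr_gt0.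
have Hay : Defs.interior K (sy^-1 *: y) by apply: interior_scale; rewrite ?invr_gt0.
have ux : pairing u (sx^-1 *: x) = 1 by rewrite pairingZr mulVf ?gt_eqF.
have uy : pairing u (sy^-1 *: y) = 1 by rewrite pairingZr mulVf ?gt_eqF.
have [Ma [Mau uMa HMa]] := core Hpt Huss HT Hax ux.
have [Mb [Mbu uMb HMb]] := core Hpt Huss HT Hay uy.
exists ((sy / sx) *: (invmx Ma *m Mb)); split; first split.
- rewrite unitmxZ ?unitmx_mul ?unitmx_inv ?Mau ?Mbu //.
  by rewrite unitfE mulf_neq0 ?invr_eq0 ?gt_eqF.
- move=> v; rewrite -scalemxAr mulmxA cone_scale_iff //; last by rewrite divr_gt0.
  rewrite -HMb; have := HMa (v *m invmx Ma); rewrite mulmxKV //.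
  by move=> ->.
- rewrite -scalemxAr mulmxA.
  have -> : x = sx *: (u *m Ma) by rewrite uMa scalerA divff ?gt_eqF // scale1r.
  rewrite -scalemxAl mulmxK // -scalemxAl uMb !scalerA.
  by rewrite divfK ?gt_eqF // divff ?gt_eqF // scale1r.
Qed.
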